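(* Let $k\ge 1$ and let $A_1,\dots,A_{2k-1}$ be (possibly empty) balanced parenthesis sequences inducing ordered matchings $M_1,\dots,M_{2k-1}$ respectively. Define parenthesis sequences $B_k=(A_k)$ and, for $j=k-1,k-2,\dots,1$, $B_j=(A_j\,B_{j+1}\,A_{2k-j})$ (concatenation inside one new pair of parentheses), so that $B_1=(A_1(A_2(\cdots(A_{k-1}(A_k)A_{k+1})\cdots)A_{2k-2})A_{2k-1})$. Then $B_1$ is a balanced parenthesis sequence; let $M$ be the matching it induces. Then $$r_<(M,K_3)\le r_<(NM_{k+t},K_3),\qquad\text{where } t=\sum_{i=1}^{k}\max\big(r_<(M_i,K_3),\,r_<(M_{2k-i},K_3)\big).$$
   Context: An ordered graph on $[N]$ is a graph with vertex set $\{1,\dots,N\}$ equipped with the natural order. Given a red/blue coloring of the edges of the complete graph on $[N]$, a red (ordered) copy of an ordered graph $G$ on $[p]$ is a strictly increasing map $\varphi:[p]\to[N]$ such that $\varphi(u)\varphi(v)$ is red for every edge $uv$ of $G$. The ordered Ramsey number $r_<(G,K_3)$ is the smallest $N$ such that every red/blue coloring of the edges of the complete graph on $[N]$ contains either a red ordered copy of $G$ or a blue triangle. A balanced parenthesis sequence of length $2m$ is a string of $m$ open and $m$ close parentheses that is correctly matched; it induces the ordered matching on $[2m]$ whose edges are the pairs $\{i,j\}$ such that the parenthesis in position $i$ is an open parenthesis matched with the close parenthesis in position $j$. The empty sequence induces the empty matching on $0$ vertices. The nested matching $NM_k$ is the ordered graph on $[2k]$ in which $\{i,j\}$ is an edge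 if and only if $i+j=2k+1$. *)

(* Defs.v *)
From Stdlib Require Import ClassicalDescription.
From mathcomp Require Import all_boot.
Set Implicit Arguments. Unset Strict Implicit. Unset Printing Implicit Defensive.

(* Vertices of an ordered graph on [p] are represented 0-indexed by 0..p-1
   (order-isomorphic to 1..p). Edges: oe u v for u < v < ov. *)
Record ograph := OGraph { ov : nat; oe : nat -> nat -> bool }.

(* A red/blue coloring of K_N on 'I_N: col (x,y) for x < y; true = red. *)
Definition coloring (N : nat) := {ffun 'I_N * 'I_N -> bool}.

Definition red N (col : coloring N) (x y : 'I_N) : bool :=
  if (x < y)%N then col (x, y) else col (y, x).

Definition has_red_copy (G : ograph) N (col : coloring N) : bool :=
  [exists phi : {ffun 'I_(ov G) -> 'I_N},
     [forall u : 'I_(ov G), forall v : 'I_(ov G),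
        ((u < v)%N ==> (phi u < phi v)%N) &&
        (((u < v)%N && oe G u v) ==> red col (phi u) (phi v))]].

Definition has_blue_triangle N (col : coloring N) : bool :=
  [exists a : 'I_N, exists b : 'I_N, exists c : 'I_N,
     [&& (a < b)%N, (b < c)%N, ~~ red col a b, ~~ red col b c & ~~ red col a c]].

Definition ramsey_K3_prop (G : ograph) (N : nat) : bool :=
  [forall col : coloring N, has_red_copy G col || has_blue_triangle col].

(* r_<(G, K_3): the least such N (0 if none exists, which never happens). *)
Definition ord_ramsey_K3 (G : ograph) : nat :=
  match excluded_middle_informative (exists N, ramsey_K3_prop G N) with
  | left h => ex_minn h
  | right _ => 0
  end.

(* Parenthesis sequences: true = '(' , false = ')'. *)
Definition balanced (s : seq bool) : bool :=
  (count id s == count negb s) &&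
  all (fun n => (count negb (take n s) <= count id (take n s))%N) (iota 0 (size s).+1).

Definition matched (s : seq bool) (i j : nat) : bool :=
  [&& (i < j)%N, (j < size s)%N, nth false s i, ~~ nth false s j &
      balanced (take (j - i - 1) (drop i.+1 s))].

Definition matching_of (s : seq bool) : ograph := OGraph (size s) (matched s).

(* nested matching NM_k on [2k] (0-indexed: i + j = 2k - 1) *)
Definition NM (k : nat) : ograph := OGraph (2 * k) (fun i j => i + j == (2 * k).-1).

Definition paren (s : seq bool) : seq bool := true :: rcons s false.

(* nestB A k d = B_{k-d}: B_k = (A_k), B_j = (A_j B_{j+1} A_{2k-j}) *)
Fixpoint nestB (A : nat -> seq bool) (k d : nat) : seq bool :=
  match d with
  | 0 => paren (A k)
  | d'.+1 => paren (A (k - d) ++ nestB A k d' ++ A (k + d))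
  end.

(* Main.v *)
Require Import Defs.
Set Warnings "-notation-overridden".
From Stdlib Require Import ClassicalDescription.
From mathcomp Require Import all_boot zify.
Set Implicit Arguments. Unset Strict Implicit.

Lemma balP s : balanced s <-> count id s = count negb s /\
  forall n, count negb (take n s) <= count id (take n s).
Proof.
rewrite /balanced; split.
- case/andP => /eqP H /allP H2; split => // n.
  case: (leqP n (size s)) => Hn. by apply: H2; rewrite mem_iota; lia.
  rewrite take_oversize ?(ltnW Hn) //; have := H2 (size s).
  by rewrite take_size mem_iota; apply; lia.
- case => H H2; apply/andP; split; [by apply/eqP | by apply/allP => n _; apply H2].
Qed.

Lemma bal_cat u v : balanced u -> balanced v -> balanced (u ++ v).
Proof.
move=> /balP [Hu Hu'] /balP [Hv Hv']; apply/balP; split.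
  by rewrite !count_cat Hu Hv.
move=> n; rewrite take_cat; case: ifP => _ //.
by rewrite !count_cat; have := Hv' (n - size u); lia.
Qed.

Lemma bal_paren u : balanced u -> balanced (paren u).
Proof.
move=> /balP [Hu Hu']; apply/balP; split.
  by rewrite /paren /= -cats1 !count_cat /= Hu; lia.
case=> [|n] //=; rewrite -cats1 take_cat; case: ifP => _.
  by have := Hu' n; lia.
rewrite !count_cat; case: (n - size u) => [|m] /=; lia.
Qed.

Lemma count_take_open u i : balanced u -> i < size u -> nth false u i ->
  count id (drop i.+1 u) < count negb (drop i.+1 u).
Proof.
move=> /balP [Hu Hu'] Hi Hn.
have Ht := take_nth false Hi; rewrite Hn in Ht.
have E1 : count id u = count id (take i.+1 u) + count id (drop i.+1 u)
  by rewrite -{1}(cat_take_drop i.+1 u) count_cat.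
have E2 : count negb u = count negb (take i.+1 u) + count negb (drop i.+1 u)
  by rewrite -{1}(cat_take_drop i.+1 u) count_cat.
have := Hu' i; move: E1 E2; rewrite Ht -cats1 !count_cat /=; lia.
Qed.

Lemma drop_catl (T : Type) n (s1 s2 : seq T) : n <= size s1 -> drop n (s1 ++ s2) = drop n s1 ++ s2.
Proof. rewrite drop_cat; case: ltngtP => //= H _. by rewrite H subnn drop0 drop_size. Qed.

Lemma matched_cat u v i j : balanced u -> balanced v -> matched (u ++ v) i j ->
  matched u i j \/ (size u <= i /\ matched v (i - size u) (j - size u)).
Proof.
move=> Bu Bv /and5P [Hij Hj Hi Hnj Hb].
rewrite size_cat in Hj.
case: (ltnP j (size u)) => Hju.
  left; apply/and5P; split => //.
  - by rewrite nth_cat (ltn_trans Hij Hju) in Hi.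
  - by rewrite nth_cat Hju in Hnj.
  - by rewrite drop_cat (leq_ltn_trans Hij Hju) takel_cat // size_drop in Hb; lia.
case: (ltnP i (size u)) => Hiu.
  exfalso; rewrite nth_cat Hiu in Hi.
  have C := @count_take_open u i Bu Hiu Hi.
  move: Hb; rewrite drop_catl // => /balP [_ H].
  have := H (size u - i.+1); rewrite take_takel; last lia.
  rewrite take_size_cat ?size_drop //; lia.
right; split => //; apply/and5P; split; first lia; first lia.
- by rewrite nth_cat ltnNge Hiu /= in Hi.
- by rewrite nth_cat ltnNge (leq_trans Hiu (ltnW Hij)) /= in Hnj.
- rewrite drop_cat ltnNge (leq_trans Hiu (leqnSn _)) /= in Hb.
  have -> : (j - size u - (i - size u) - 1) = j - i - 1 by lia.
  by have -> : (i - size u).+1 = i.+1 - size u by lia.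
Qed.

Lemma matched_paren u i j : balanced u -> matched (paren u) i j ->
  (i = 0 /\ j = (size u).+1) \/ (0 < i /\ matched u i.-1 j.-1).
Proof.
move=> Bu /and5P [Hij Hj Hi Hnj Hb].
rewrite /paren /= size_rcons in Hj.
move: Hi Hnj Hb; rewrite /paren -cats1.
case: j Hij Hj => [|j] //.
case: i => [|i] Hij Hj /=.
  move=> _; rewrite subn0 subn1 /= drop0 => Hnj Hb.
  case: (ltnP j (size u)) => Hju; last by left; split => //; lia.
  exfalso; move: Hnj Hb; rewrite nth_cat Hju takel_cat; last lia.
  move=> Hnj /balP [Hc _]; case/balP: Bu => _ H'.
  have := H' j.+1; rewrite (take_nth false Hju) -cats1 count_cat /=.
  move: Hnj; case: (nth false u j) => //= _; rewrite count_cat /=; lia.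
move=> Hi Hnj Hb.
have Hiu : i < size u.
  case: (ltnP i (size u)) => // Hiu; exfalso; move: Hi; rewrite nth_cat ltnNge Hiu /=.
  by case: (i - size u) => [|[|m]] /=.
rewrite nth_cat Hiu in Hi.
have Hb' : balanced (take (j - i - 1) (drop i.+1 u ++ [:: false])).
  by rewrite -drop_catl //; move: Hb; rewrite subSS.
case: (ltnP j (size u)) => Hju.
  right; split => //; apply/and5P; split => //.
  - by rewrite nth_cat Hju in Hnj.
  - rewrite takel_cat ?size_drop in Hb' => //; lia.
exfalso; have C := @count_take_open u i Bu Hiu Hi.
have Hs : size (drop i.+1 u) = j - i - 1 by rewrite size_drop; lia.
move: Hb'; rewrite take_size_cat //.
case/balP => Hc _; lia.
Qed.

Lemma bal_nestB (A : nat -> seq bool) k d :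
  (forall i, 1 <= i <= 2 * k - 1 -> balanced (A i)) -> d < k ->
  balanced (nestB A k d).
Proof.
move=> HA; elim: d => [|d IH] Hd /=.
  by apply: bal_paren; apply: HA; lia.
apply: bal_paren; apply: bal_cat; first by apply: HA; lia.
by apply: bal_cat; [apply: IH; lia | apply: HA; lia].
Qed.

Definition emb N (col : coloring N) (s : seq bool) (f : nat -> 'I_N) :=
  (forall i j, i < j < size s -> f i < f j) /\
  (forall i j, matched s i j -> red col (f i) (f j)).

Definition catf N (f g : nat -> 'I_N) n i := if i < n then f i else g (i - n).
Definition parf N (x y : 'I_N) (f : nat -> 'I_N) n i :=
  if i == 0 then x else if i <= n then f i.-1 else y.

Lemma matched_lt s i j : matched s i j -> i < j < size s.
Proof. by case/and5P => -> ->. Qed.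

Lemma emb_cat N (col : coloring N) u v f g :
  balanced u -> balanced v -> emb col u f -> emb col v g ->
  (forall i j, i < size u -> j < size v -> f i < g j) ->
  emb col (u ++ v) (catf f g (size u)).
Proof.
move=> Bu Bv [Fi Fr] [Gi Gr] H; split.
  move=> i j; rewrite size_cat /catf => Hij.
  case: ifP => Hi; case: ifP => Hj.
  - by apply: Fi; lia.
  - by apply: H => //; lia.
  - lia.
  - by apply: Gi; lia.
move=> i j /(matched_cat Bu Bv) [M|[Hi M]]; rewrite /catf.
  by have := matched_lt M => Hm; rewrite !ifT; [apply: Fr | lia | lia].
have := matched_lt M => Hm; rewrite !ifF; [by apply: Gr | lia | lia].
Qed.

Lemma emb_paren N (col : coloring N) u f (x y : 'I_N) :
  balanced u -> emb col u f -> (forall i, i < size u -> x < f i < y) ->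
  x < y -> red col x y -> emb col (paren u) (parf x y f (size u)).
Proof.
move=> Bu [Fi Fr] H Hxy Rxy; split.
  move=> i j; rewrite /paren /= size_rcons /parf => Hij.
  case: (eqVneq i 0) => Hi0; case: (eqVneq j 0) => Hj0; try lia.
    case: ifP => Hj //; have := H j.-1; lia.
  case: ifP => Hi; case: ifP => Hj.
  - by apply: Fi; lia.
  - have := H i.-1; lia.
  - lia.
  - lia.
move=> i j /(matched_paren Bu) [[-> ->]|[Hi M]]; rewrite /parf.
  by rewrite /= ltnn.
have := matched_lt M => Hm.
have -> : (i == 0) = false by lia.
have -> : (j == 0) = false by lia.
rewrite !ifT; [by apply: Fr | lia | lia].
Qed.

Lemma catf_range N (P : 'I_N -> Prop) f g n m :
  (forall i, i < n -> P (f i)) -> (forall i, i < m -> P (g i)) ->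
  forall i, i < n + m -> P (catf f g n i).
Proof. move=> Hf Hg i Hi; rewrite /catf; case: ifP => H; [apply: Hf | apply: Hg]; lia. Qed.

Lemma parf_range N (P : 'I_N -> Prop) x y f n :
  P x -> P y -> (forall i, i < n -> P (f i)) ->
  forall i, P (parf x y f n i).
Proof. move=> Hx Hy Hf i; rewrite /parf; case: ifP => // H; case: ifP => // H2; apply: Hf; lia. Qed.

Lemma red_sym N (col : coloring N) a b : red col a b = red col b a.
Proof.
rewrite /red; case: (ltngtP a b) => // H.
by have -> := val_inj H.
Qed.

Lemma emb_piece N (col : coloring N) (u : seq bool) r (g : nat -> 'I_N) :
  ~~ has_blue_triangle col -> ramsey_K3_prop (matching_of u) r ->
  (forall i j, i < j < r -> g i < g j) ->
  exists f, emb col u f /\ forall i, i < size u -> exists2 j, j < r & f i = g j.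
Proof.
move=> NB /forallP HR Hg.
pose col' : coloring r := [ffun p : 'I_r * 'I_r => red col (g p.1) (g p.2)].
have Rc : forall x y, red col' x y = red col (g x) (g y).
  by move=> x y; rewrite /red !ffunE /=; case: ifP => // _; rewrite -red_sym.
case/orP: (HR col') => [/existsP [psi /forallP Hpsi] | /existsP [a /existsP [b /existsP [c]]]];
  last first.
  case/and5P => Hab Hbc Rab Rbc Rac; exfalso; move/negP: NB; apply.
  apply/existsP; exists (g a); apply/existsP; exists (g b); apply/existsP; exists (g c).
  rewrite -!Rc Rab Rbc Rac (Hg a b) ?(Hg b c) //= ?Hab ?Hbc ltn_ord ?andbT //.
pose f i := if (insub i : option 'I_(size u)) is Some i' then g (psi i') else g 0.
have Hf : forall i (Hi : i < size u), f i = g (psi (Ordinal Hi)).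
  by move=> i Hi; rewrite /f insubT.
exists f; split; first split.
- move=> i j /andP [Hij Hj]; have Hi : i < size u by lia.
  rewrite (Hf i Hi) (Hf j Hj).
  have := Hpsi (Ordinal Hi) => /forallP /(_ (Ordinal Hj)) /andP [H1 _].
  move: H1 => /= /implyP /(_ Hij) H1.
  by apply: Hg; rewrite H1 ltn_ord.
- move=> i j M; have := matched_lt M => /andP [Hij Hj].
  have Hi : i < size u by lia.
  rewrite (Hf i Hi) (Hf j Hj) -Rc.
  have := Hpsi (Ordinal Hi) => /forallP /(_ (Ordinal Hj)) /andP [_ H2].
  by move: H2 => /= /implyP; apply; rewrite Hij.
- by move=> i Hi; exists (psi (Ordinal Hi)); rewrite ?Hf.
Qed.

Lemma pairwise_filter_impl (T : eqType) (r r' : rel T) (P : pred T) s :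
  pairwise r s -> (forall x y, x \in s -> y \in s -> P x -> P y -> r x y -> r' x y) ->
  pairwise r' (filter P s).
Proof.
elim: s => [|x s IH] //= /andP [Hx Hs] H.
have IH' := IH Hs (fun a b Ha Hb => H a b (@mem_behead _ (x :: s) _ Ha) (@mem_behead _ (x :: s) _ Hb)).
case: ifP => Px //=; rewrite IH' andbT.
apply/allP => y; rewrite mem_filter => /andP [Py Ys].
by apply: H => //; [rewrite inE eqxx | rewrite inE Ys orbT | move/allP: Hx; apply].
Qed.

Lemma clique N (col : coloring N) : ~~ has_blue_triangle col ->
  forall p (S : seq 'I_N), pairwise (fun x y : 'I_N => x < y) S -> p * p <= size S ->
  exists C, [/\ pairwise (fun x y : 'I_N => (x < y) && red col x y) C, p <= size C &
                {subset C <= S}].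
Proof.
move=> NB; elim=> [|p IH] S HS Hsz; first by exists [::].
case: S HS Hsz => [|v rest] /=; first lia.
move=> /andP [Hv Hrest] Hsz.
pose B := [seq w <- rest | ~~ red col v w].
case: (leqP p.+1 (size B)) => HB.
  exists B; split => //.
  - apply: pairwise_filter_impl Hrest _ => x y Hx Hy Px Py Hxy; rewrite Hxy /=.
    apply/negPn/negP => Rxy; move/negP: NB; apply.
    apply/existsP; exists v; apply/existsP; exists x; apply/existsP; exists y.
    by rewrite Px Rxy Py Hxy (allP Hv x Hx).
  - by move=> x Hx; rewrite inE; move: Hx; rewrite mem_filter => /andP [_ ->]; rewrite orbT.
pose S' := [seq w <- rest | red col v w].
have Hs' : size S' + size B = size rest.
  by rewrite !size_filter; apply: count_predC.
have [C [HC1 HC2 HC3]] : exists C, [/\ pairwise (fun x y : 'I_N => (x < y) && red col x y) C,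
   p <= size C & {subset C <= S'}].
  apply: IH; first by apply: pairwise_filter.
  lia.
exists (v :: C); split => //=.
- rewrite HC1 andbT; apply/allP => y Hy.
  have := HC3 y Hy; rewrite mem_filter => /andP [-> Hy'].
  by rewrite (allP Hv y Hy').
- move=> x; rewrite inE => /orP [/eqP ->|Hx]; first by rewrite inE eqxx.
  by have := HC3 x Hx; rewrite mem_filter => /andP [_ H]; rewrite inE H orbT.
Qed.

Lemma ramsey_ex G : exists N, ramsey_K3_prop G N.
Proof.
set p := ov G; exists (p * p).+1; apply/forallP => col.
case: (boolP (has_blue_triangle col)) => NB; first by rewrite orbT.
have HS : pairwise (fun x y : 'I_(p * p).+1 => x < y) (enum 'I_(p * p).+1).
  have := iota_ltn_sorted 0 (p * p).+1.
  by rewrite -val_enum_ord sorted_pairwise ?pairwise_map //; apply: ltn_trans.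
have Hsz : p * p <= size (enum 'I_(p * p).+1) by rewrite size_enum_ord.
have [C [HC1 HC2 _]] := clique NB HS Hsz.
rewrite orbF; apply/existsP; exists [ffun u : 'I_p => nth ord0 C u].
apply/forallP => u; apply/forallP => v; rewrite !ffunE.
have := (pairwiseP ord0 HC1) u v.
have Hu : u < size C by apply: leq_trans HC2.
have Hv : v < size C by apply: leq_trans HC2.
move=> /(_ Hu Hv) H; apply/andP; split; apply/implyP.
  by move=> /H /andP [].
by move=> /andP [/H /andP [_ ->]].
Qed.

Lemma ord_spec G : ramsey_K3_prop G (ord_ramsey_K3 G) /\
  forall N, ramsey_K3_prop G N -> ord_ramsey_K3 G <= N.
Proof.
rewrite /ord_ramsey_K3; case: excluded_middle_informative => [h|h]; last first.
  by exfalso; apply: h; apply: ramsey_ex.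
by case: ex_minnP => m Hm Hmin; split.
Qed.

Definition rr (A : nat -> seq bool) k i :=
  maxn (ord_ramsey_K3 (matching_of (A i))) (ord_ramsey_K3 (matching_of (A (2 * k - i)))).
Definition need A k d := \sum_(k - d <= i < k.+1) (rr A k i).+1.
Definition rng N (c : nat -> 'I_N) lo hi (v : 'I_N) := exists2 j, lo <= j <= hi & v = c j.

Lemma rng_w N (c : nat -> 'I_N) lo hi lo' hi' v :
  lo <= lo' -> hi' <= hi -> rng c lo' hi' v -> rng c lo hi v.
Proof. by move=> H1 H2 [j Hj ->]; exists j => //; lia. Qed.

Lemma rng_lt N (c : nat -> 'I_N) n lo1 hi1 lo2 hi2 v w :
  (forall i j, i < j < 2 * n -> c i < c j) ->
  rng c lo1 hi1 v -> rng c lo2 hi2 w -> hi1 < lo2 -> hi2 < 2 * n -> v < w.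
Proof. by move=> Hc [i Hi ->] [j Hj ->] H1 H2; apply: Hc; lia. Qed.

Lemma need_pos A k d : d < k -> 0 < need A k d.
Proof. by move=> Hd; rewrite /need big_ltn; lia. Qed.

Lemma piece_at N (col : coloring N) n (c : nat -> 'I_N) (u : seq bool) p off :
  ~~ has_blue_triangle col -> (forall i j, i < j < 2 * n -> c i < c j) ->
  ord_ramsey_K3 (matching_of u) <= p -> off + p <= 2 * n ->
  exists f, emb col u f /\ forall i, i < size u -> rng c off (off + p).-1 (f i).
Proof.
move=> NB Hc Hp Ho.
have [HR _] := ord_spec (matching_of u).
have [f [Hf Hr]] := emb_piece NB HR (g := fun j => c (off + j))
   (fun i j H => Hc (off + i) (off + j) (ltac:(lia))).
exists f; split => // i Hi; have [j Hj ->] := Hr i Hi; exists (off + j) => //; lia.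
Qed.

Lemma Emb N (col : coloring N) n (c : nat -> 'I_N) k (A : nat -> seq bool) :
  ~~ has_blue_triangle col ->
  (forall i j, i < j < 2 * n -> c i < c j) ->
  (forall j, j < n -> red col (c j) (c (2 * n - 1 - j))) ->
  (forall i, 1 <= i <= 2 * k - 1 -> balanced (A i)) ->
  forall d, d < k -> forall m, m + need A k d <= n ->
  exists f, emb col (nestB A k d) f /\
    forall i, i < size (nestB A k d) -> rng c m (2 * n - 1 - m) (f i).
Proof.
move=> NB Hc1 Hc2 HA.
have Hx : forall j, rng c j j (c j) by move=> j; exists j => //; rewrite leqnn.
elim=> [|d IH] Hd m Hm /=.
  move: Hm; rewrite /need subn0 big_nat1 => Hm.
  set p := rr A k k in Hm.
  have Hp : ord_ramsey_K3 (matching_of (A k)) <= p by rewrite /p /rr leq_maxl.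
  have [f0 [He0 Hr0]] := piece_at (off := m.+1) NB Hc1 Hp (ltac:(lia)).
  exists (parf (c m) (c (2 * n - 1 - m)) f0 (size (A k))); split.
    apply: emb_paren => //; first (by apply: HA; lia).
    - move=> i Hi; have H := Hr0 i Hi; apply/andP; split.
        by apply: (rng_lt Hc1 (Hx m) H); lia.
      by apply: (rng_lt Hc1 H (Hx _)); lia.
    - by apply: Hc1; lia.
    - by apply: Hc2; lia.
  move=> i _; apply: (@parf_range _ (rng c m (2 * n - 1 - m))).
  - by exists m => //; lia.
  - by exists (2 * n - 1 - m) => //; lia.
  - by move=> j Hj; apply: rng_w (Hr0 j Hj); lia.
have Hd' : d < k by lia.
set p := rr A k (k - d.+1).
have Eneed : need A k d.+1 = p.+1 + need A k d.
  rewrite /need big_ltn; last lia.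
  by have -> : (k - d.+1).+1 = k - d by lia.
have Hpos := need_pos A Hd'.
rewrite Eneed in Hm.
have [f' [He' Hr']] := IH Hd' (m.+1 + p) (ltac:(lia)).
have Hp1 : ord_ramsey_K3 (matching_of (A (k - d.+1))) <= p by rewrite /p /rr leq_maxl.
have Hp2 : ord_ramsey_K3 (matching_of (A (k + d.+1))) <= p.
  by rewrite /p /rr (_ : 2 * k - (k - d.+1) = k + d.+1) ?leq_maxr //; lia.
have [f1 [He1 Hr1]] := piece_at (off := m.+1) NB Hc1 Hp1 (ltac:(lia)).
have [f2 [He2 Hr2]] := piece_at (off := 2 * n - 1 - m - p) NB Hc1 Hp2 (ltac:(lia)).
have B1 : balanced (A (k - d.+1)) by apply: HA; lia.
have B2 : balanced (A (k + d.+1)) by apply: HA; lia.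
have B' : balanced (nestB A k d) by apply: bal_nestB.
set sb := size (nestB A k d).
have R2 : forall i, i < sb + size (A (k + d.+1)) ->
    rng c (m.+1 + p) (2 * n - 2 - m) (catf f' f2 sb i).
  apply: catf_range => i Hi.
    by apply: rng_w (Hr' i Hi); lia.
  by apply: rng_w (Hr2 i Hi); lia.
have E2 : emb col (nestB A k d ++ A (k + d.+1)) (catf f' f2 sb).
  apply: emb_cat => // i j Hi Hj.
  by apply: (rng_lt Hc1 (Hr' i Hi) (Hr2 j Hj)); lia.
set su := size (A (k - d.+1)).
have E1 : emb col (A (k - d.+1) ++ (nestB A k d ++ A (k + d.+1)))
            (catf f1 (catf f' f2 sb) su).
  apply: emb_cat => //; first by apply: bal_cat.
  move=> i j Hi Hj; rewrite size_cat in Hj.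
  by apply: (rng_lt Hc1 (Hr1 i Hi) (R2 j Hj)); lia.
have R1 : forall i, i < su + (sb + size (A (k + d.+1))) ->
    rng c m.+1 (2 * n - 2 - m) (catf f1 (catf f' f2 sb) su i).
  apply: catf_range => i Hi.
    by apply: rng_w (Hr1 i Hi); lia.
  by apply: rng_w (R2 i Hi); lia.
exists (parf (c m) (c (2 * n - 1 - m)) (catf f1 (catf f' f2 sb) su)
          (size (A (k - d.+1) ++ (nestB A k d ++ A (k + d.+1))))); split.
  apply: emb_paren => //; first by apply: bal_cat => //; apply: bal_cat.
  - move=> i Hi; rewrite !size_cat in Hi; have H := R1 i Hi; apply/andP; split.
      by apply: (rng_lt Hc1 (Hx m) H); lia.
    by apply: (rng_lt Hc1 H (Hx _)); lia.
  - by apply: Hc1; lia.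
  - by apply: Hc2; lia.
move=> i _; apply: (@parf_range _ (rng c m (2 * n - 1 - m))).
- by exists m => //; lia.
- by exists (2 * n - 1 - m) => //; lia.
- by move=> j Hj; rewrite !size_cat in Hj; apply: rng_w (R1 j Hj); lia.
Qed.

Theorem lemma2p3 (k : nat) (A : nat -> seq bool) :
  (1 <= k)%N ->
  (forall i, (1 <= i <= 2 * k - 1)%N -> balanced (A i)) ->
  balanced (nestB A k (k - 1)) /\
  (ord_ramsey_K3 (matching_of (nestB A k (k - 1)))
   <= ord_ramsey_K3
        (NM (k + \sum_(1 <= i < k.+1)
                   maxn (ord_ramsey_K3 (matching_of (A i)))
                        (ord_ramsey_K3 (matching_of (A (2 * k - i)))))))%N.
Proof.
move=> Hk HA; split; first by apply: (bal_nestB HA); lia.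
have -> : \sum_(1 <= i < k.+1) maxn (ord_ramsey_K3 (matching_of (A i)))
                        (ord_ramsey_K3 (matching_of (A (2 * k - i))))
        = \sum_(1 <= i < k.+1) rr A k i by [].
set t := \sum_(1 <= i < k.+1) rr A k i.
set n := k + t.
have Eneed : need A k (k - 1) = n.
  rewrite /need (_ : k - (k - 1) = 1); last lia.
  under eq_bigr do rewrite -addn1.
  by rewrite big_split /= sum_nat_const_nat /n /t; lia.
have [HRn _] := ord_spec (NM n).
have [_ Hmin] := ord_spec (matching_of (nestB A k (k - 1))).
apply: Hmin; apply/forallP => col.
case: (boolP (has_blue_triangle col)) => NB; first by rewrite orbT.
rewrite orbF.
move/forallP: HRn => /(_ col); rewrite (negbTE NB) orbF => /existsP [phi /forallP Hphi].
have H2n : 0 < 2 * n by lia.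
pose c i := if (insub i : option 'I_(2 * n)) is Some i' then phi i' else phi (Ordinal H2n).
have Hcf : forall i (Hi : i < 2 * n), c i = phi (Ordinal Hi).
  by move=> i Hi; rewrite /c insubT.
have Hc1 : forall i j, i < j < 2 * n -> c i < c j.
  move=> i j /andP [Hij Hj]; have Hi : i < 2 * n by lia.
  rewrite (Hcf i Hi) (Hcf j Hj).
  have := Hphi (Ordinal Hi) => /forallP /(_ (Ordinal Hj)) /andP [H1 _].
  by move: H1 => /= /implyP /(_ Hij).
have Hc2 : forall j, j < n -> red col (c j) (c (2 * n - 1 - j)).
  move=> j Hj; have Hi : j < 2 * n by lia.
  have Hj' : 2 * n - 1 - j < 2 * n by lia.
  rewrite (Hcf j Hi) (Hcf _ Hj').
  have := Hphi (Ordinal Hi) => /forallP /(_ (Ordinal Hj')) /andP [_ H2].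
  move: H2 => /= /implyP; apply; apply/andP; split; first lia.
  by apply/eqP; lia.
have Hm : 0 + need A k (k - 1) <= n by rewrite Eneed.
have Hd : k - 1 < k by lia.
have [f [[Fi Fr] _]] := Emb NB Hc1 Hc2 HA Hd Hm.
apply/existsP; exists [ffun u : 'I_(size (nestB A k (k - 1))) => f u].
apply/forallP => u; apply/forallP => v; rewrite !ffunE; apply/andP; split; apply/implyP.
  by move=> Huv; apply: Fi; rewrite Huv ltn_ord.
by move=> /andP [_ M]; apply: Fr.
Qed.
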